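(* Let $Z\subseteq(\mathbb P^1)^d$ be the common vanishing locus of the multi-homogenizations $P^h$ of all linear forms $P=\sum_{\lambda\in\Phi^+}c_\lambda x_\lambda$ vanishing on $\mathfrak h$ (i.e. with $\sum_\lambda c_\lambda\lambda=0$). Then $Z=\bar{\mathfrak h}$ as sets.
   Context: Let $\mathfrak g$ be a complex semisimple Lie algebra, $\mathfrak h$ a Cartan subalgebra, $\Phi\subset\mathfrak h^*$ its root system, $\Phi^+$ a fixed set of positive roots, $d=|\Phi^+|$. Identify $\mathbb C$ with $\{[x_0:x_1]:x_0\ne0\}\subset\mathbb P^1$ via $c\mapsto[1:c]$, $\infty=[0:1]$, and write points of $(\mathbb P^1)^d$ as $(x_\lambda)_{\lambda\in\Phi^+}$, $x_\lambda=[x_{\lambda,0}:x_{\lambda,1}]$. Identify $\mathfrak h$ with its image under the injective linear map $h\mapsto(\lambda(h))_{\lambda\in\Phi^+}\in\mathbb C^d\subset(\mathbb P^1)^d$; $\bar{\mathfrak h}$ (the wonderful compactification of $\mathfrak h$) denotes the Zariski closure of $\mathfrak h$ in $(\mathbb P^1)^d$. For a linear form $P$ with support $\mathrm{supp}(P)=\{\lambda:c_\lambda\ne0\}$, $P^h=\sum_{\lambda\in\mathrm{supp}P}c_\lambda x_{\lambda,1}\prod_{\mu\in\mathrm{supp}P,\mu\ne\lambda}x_{\mu,0}$. *)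

(* Defs.v *)
From HB Require Import structures.
From mathcomp Require Import all_boot all_order all_algebra.
From mathcomp Require Import reals.
From mathcomp Require Import complex.
From mathcomp Require Import mpoly.

Set Implicit Arguments.
Unset Strict Implicit.
Unset Printing Implicit Defensive.

Import Order.TTheory GRing.Theory Num.Theory.
Local Open Scope ring_scope.

Section RootSystems.
Variables (R : realType) (n : nat).

Definition dotv (u v : 'rV[R]_n) : R := (u *m v^T) 0 0.

Definition cartan (b a : 'rV[R]_n) : R := 2 * dotv b a / dotv a a.

(** These are exactly
    the root systems of the complex semisimple Lie algebras of rank n. *)
Definition is_root_system (Phi : seq 'rV[R]_n) : Prop :=
  [/\ uniq Phi /\ 0 \notin Phi,
      (<<Phi>>%VS = fullv),
      (forall a b, a \in Phi -> b \in Phi -> b - cartan b a *: a \in Phi),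
      (forall a b, a \in Phi -> b \in Phi -> cartan b a \is a Num.int) &
      (forall a (c : R), a \in Phi -> c *: a \in Phi -> c = 1 \/ c = -1)].

Definition regular_for (Phi : seq 'rV[R]_n) (f : 'rV[R]_n) : Prop :=
  forall a, a \in Phi -> dotv f a != 0.

Definition pos_roots (Phi : seq 'rV[R]_n) (f : 'rV[R]_n) : seq 'rV[R]_n :=
  [seq a <- Phi | 0 < dotv f a].

(** Complexification: h = C^n, h^* = C^n, and a root a acts on h by
    a(h) = sum_j a_j h_j. *)
Definition root_eval (a : 'rV[R]_n) (h : 'rV[R[i]]_n) : R[i] :=
  \sum_(j < n) Complex (a 0 j) 0 * h 0 j.

End RootSystems.

Section P1d.
Variables (C : comNzRingType) (d : nat).

(** Points of (P^1)^d are represented by families of homogeneous coordinates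
    x : 'I_d -> C * C, x_lambda = [x_{lambda,0} : x_{lambda,1}], each pair
    nonzero.  All predicates below are invariant under rescaling each pair. *)
Definition P1d_point (x : 'I_d -> C * C) : Prop :=
  forall i, (x i).1 != 0 \/ (x i).2 != 0.

(** Variables of the coordinate ring: x_{i,0} is variable 2i,
    x_{i,1} is variable 2i+1, in {mpoly C[d.*2]}. *)
Lemma var0_proof (i : 'I_d) : (i.*2 < d.*2)%N.
Proof. by rewrite ltn_double. Qed.
Lemma var1_proof (i : 'I_d) : (i.*2.+1 < d.*2)%N.
Proof. by rewrite -doubleS leq_double. Qed.
Definition var0 (i : 'I_d) : 'I_(d.*2) := Ordinal (var0_proof i).
Definition var1 (i : 'I_d) : 'I_(d.*2) := Ordinal (var1_proof i).

Lemma half_proof (k : 'I_(d.*2)) : (k./2 < d)%N.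
Proof. by rewrite ltn_half_double. Qed.
Definition pair_of (k : 'I_(d.*2)) : 'I_d := Ordinal (half_proof k).

Definition coords (x : 'I_d -> C * C) (k : 'I_(d.*2)) : C :=
  if odd k then (x (pair_of k)).2 else (x (pair_of k)).1.

Definition multihomog (e : 'I_d -> nat) (p : {mpoly C[d.*2]}) : Prop :=
  forall m, m \in msupp p -> forall i, (m (var0 i) + m (var1 i))%N = e i.

Definition in_zariski_closure (S : ('I_d -> C * C) -> Prop)
    (x : 'I_d -> C * C) : Prop :=
  forall (e : 'I_d -> nat) (p : {mpoly C[d.*2]}), multihomog e p ->
    (forall y, S y -> p.@[coords y] = 0) -> p.@[coords x] = 0.

Definition mhomogenize (c : 'I_d -> C) : {mpoly C[d.*2]} :=
  \sum_(i | c i != 0)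
     c i *: ('X_(var1 i) * \prod_(j | (c j != 0) && (j != i)) 'X_(var0 j)).

Definition affine_pt (v : 'I_d -> C) : 'I_d -> C * C := fun i => (1, v i).

End P1d.

Section Main.
Variables (R : realType) (n : nat) (Phi : seq 'rV[R]_n) (f : 'rV[R]_n).

Local Notation Phip := (pos_roots Phi f).
Local Notation d := (size Phip).

Definition proot (i : 'I_d) : 'rV[R]_n := nth 0 Phip i.

Definition h_embed (h : 'rV[R[i]]_n) : 'I_d -> R[i] * R[i] :=
  affine_pt (fun i => root_eval (proot i) h).

Definition h_image (x : 'I_d -> R[i] * R[i]) : Prop :=
  exists h, x = h_embed h.

Definition in_hbar (x : 'I_d -> R[i] * R[i]) : Prop :=
  in_zariski_closure h_image x.

Definition vanishes_on_h (c : 'I_d -> R[i]) : Prop :=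
  forall h : 'rV[R[i]]_n, \sum_(i < d) c i * root_eval (proot i) h = 0.

Definition in_Z (x : 'I_d -> R[i] * R[i]) : Prop :=
  forall c : 'I_d -> R[i], vanishes_on_h c -> (mhomogenize c).@[coords x] = 0.

End Main.

(* Main.v *)
Require Import Defs.
From HB Require Import structures.
From mathcomp Require Import all_boot all_order all_algebra.
From mathcomp Require Import reals complex mpoly.
From mathcomp Require Import ring.

Set Implicit Arguments.
Unset Strict Implicit.
Unset Printing Implicit Defensive.
Import Order.TTheory GRing.Theory Num.Theory.
Local Open Scope ring_scope.

Section Gen.
Variable C : comNzRingType.

Lemma prod_double (F : nat -> C) d :
  \prod_(k < d.*2) F k = \prod_(i < d) (F i.*2 * F i.*2.+1).
Proof.
elim: d => [|d IH]; first by rewrite !big_ord0.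
by rewrite doubleS !big_ord_recr /= IH mulrA.
Qed.

Variable d : nat.

Lemma pair_of_var0 (i : 'I_d) : pair_of (var0 i) = i.
Proof. by apply: val_inj => /=; rewrite half_double. Qed.

Lemma pair_of_var1 (i : 'I_d) : pair_of (var1 i) = i.
Proof. by apply: val_inj => /=; rewrite uphalf_double. Qed.

Lemma coords_var0 (x : 'I_d -> C * C) i : coords x (var0 i) = (x i).1.
Proof. by rewrite /coords /= odd_double pair_of_var0. Qed.

Lemma coords_var1 (x : 'I_d -> C * C) i : coords x (var1 i) = (x i).2.
Proof. by rewrite /coords /= odd_double pair_of_var1. Qed.

Lemma meval_scale (e : 'I_d -> nat) (p : {mpoly C[d.*2]}) (lam : 'I_d -> C)
    (x x' : 'I_d -> C * C) :
  multihomog e p -> (forall i, x' i = (lam i * (x i).1, lam i * (x i).2)) ->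
  p.@[coords x'] = (\prod_i lam i ^+ e i) * p.@[coords x].
Proof.
move=> Hp Hx; rewrite !mevalE big_distrr /=; apply: eq_big_seq => m Hm.
rewrite mulrCA; congr (_ * _).
have -> : \prod_(k < d.*2) coords x' k ^+ m k =
   \prod_(k < d.*2) (lam (pair_of k) ^+ m k) * \prod_(k < d.*2) (coords x k ^+ m k).
  rewrite -big_split /=; apply: eq_bigr => k _.
  by rewrite /coords Hx -exprMn; case: (odd k).
congr (_ * _).
pose F (k : nat) := oapp (fun o : 'I_(d.*2) => lam (pair_of o) ^+ m o) 1 (insub k).
transitivity (\prod_(k < d.*2) F k); first by apply: eq_bigr => k _; rewrite /F valK.
rewrite prod_double; apply: eq_bigr => i _.
have -> : F i.*2 = lam i ^+ m (var0 i).
  by rewrite /F (_ : i.*2 = val (var0 i)) // valK /= pair_of_var0.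
have -> : F i.*2.+1 = lam i ^+ m (var1 i).
  by rewrite /F (_ : i.*2.+1 = val (var1 i)) // valK /= pair_of_var1.
by rewrite -exprD (Hp m Hm i).
Qed.

Lemma meval_mhom (c : 'I_d -> C) x :
  (mhomogenize c).@[coords x] = \sum_(i | c i != 0)
     c i * ((x i).2 * \prod_(j | (c j != 0) && (j != i)) (x j).1).
Proof.
rewrite /mhomogenize (big_morph (meval (coords x)) (@mevalD _ _ _) (@meval0 _ _ _)).
apply: eq_bigr => i _.
rewrite mevalZ mevalM mevalXU coords_var1; congr (_ * (_ * _)).
rewrite (big_morph (meval (coords x)) (@mevalM _ _ _) (@meval1 _ _ _)).
by apply: eq_bigr => j _; rewrite mevalXU coords_var0.
Qed.

Lemma var0_inj : injective (@var0 d).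
Proof. by move=> a b /(congr1 val) /= /double_inj /val_inj. Qed.

Lemma var1_inj : injective (@var1 d).
Proof. by move=> a b /(congr1 val) [] /double_inj /val_inj. Qed.

Lemma var10 (a b : 'I_d) : (var1 a == var0 b) = false.
Proof. by apply/negbTE/eqP => /(congr1 (odd \o val)); rewrite /= !odd_double. Qed.

Lemma var01 (a b : 'I_d) : (var0 a == var1 b) = false.
Proof. by rewrite eq_sym var10. Qed.

Lemma sum_pred1 (P : pred 'I_d) (k : 'I_d) :
  (\sum_(j | P j) (j == k : nat))%N = P k.
Proof.
case: (boolP (P k)) => Hk.
  rewrite (bigD1 k) //= eqxx big1 // => j /andP[_ /negbTE ->] //.
by rewrite big1 // => j Pj; case: eqP => // E; rewrite -E Pj in Hk.
Qed.

Lemma multihomog_sum (e : 'I_d -> nat) (P : pred 'I_d) (F : 'I_d -> {mpoly C[d.*2]}) :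
  (forall i, P i -> multihomog e (F i)) -> multihomog e (\sum_(i | P i) F i).
Proof.
move=> H; apply: big_ind => //.
- by move=> m; rewrite msupp0.
- move=> p q Hp Hq m /msuppD_le; rewrite mem_cat => /orP[]; [exact: Hp | exact: Hq].
Qed.

Lemma mhom_multihomog (c : 'I_d -> C) :
  multihomog (fun i => (c i != 0 : nat)) (mhomogenize c).
Proof.
pose mono i := (U_(var1 i) + \sum_(j | (c j != 0%R) && (j != i)) U_(var0 j))%MM.
have -> : mhomogenize c = \sum_(i | c i != 0) c i *: 'X_[mono i].
  apply: eq_bigr => i _; rewrite mpolyXD; congr (_ *: (_ * _)).
  by rewrite (big_morph (fun m => 'X_[m] : {mpoly C[d.*2]}) (@mpolyXD _ _) (@mpolyX0 _ _)).
apply: multihomog_sum => i ci m /msuppZ_le; rewrite msuppX inE => /eqP -> i'.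
rewrite /mono !mnmDE !mnm_sumE !mnm1E var10 (inj_eq var1_inj).
rewrite (eq_bigr (fun j => (j == i' : nat))); last first.
  by move=> j _; rewrite mnm1E (inj_eq var0_inj).
rewrite sum_pred1 big1; last by move=> j _; rewrite mnm1E var01.
case: (eqVneq i i') => [<-|Hne] /=.
  by rewrite andbF ci.
by rewrite andbT add0n !addn0.
Qed.

End Gen.

Lemma meval_affine (C : comNzRingType) N (p : {mpoly C[N]}) (al be : 'I_N -> C)
    (v : C -> 'I_N -> C) :
  (forall t k, v t k = al k * t + be k) ->
  exists Q : {poly C}, forall t, Q.[t] = p.@[v t].
Proof.
move=> Hv.
exists (\sum_(m <- msupp p) p@_m *: \prod_(k < N) ('X * (al k)%:P + (be k)%:P) ^+ m k).
move=> t; rewrite mevalE horner_sum; apply: eq_bigr => m _.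
rewrite hornerZ horner_prod; congr (_ * _); apply: eq_bigr => k _.
by rewrite horner_exp hornerD hornerM hornerX !hornerC Hv mulrC.
Qed.

Lemma poly_at0 (C : numFieldType) (Q : {poly C}) :
  (forall t, t != 0 -> Q.[t] = 0) -> Q.[0] = 0.
Proof.
move=> H.
have -> : Q = 0; last by rewrite horner0.
apply: (@roots_geq_poly_eq0 _ _ [seq (k.+1)%:R | k <- iota 0 (size Q)]).
- by apply/allP => t /mapP [k _ ->]; apply/rootP/H; rewrite pnatr_eq0.
- rewrite map_inj_uniq ?iota_uniq // => a b /eqP; rewrite eqr_nat eqSS => /eqP //.
- by rewrite size_map size_iota.
Qed.

Lemma dualP (C : fieldType) n d (B : 'M[C]_(n, d)) (b : 'rV[C]_d) :
  (forall c : 'cV_d, B *m c = 0 -> b *m c = 0) -> exists u : 'rV_n, b = u *m B.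
Proof.
move=> H.
have : (b <= B)%MS.
  rewrite submxE; apply/eqP/matrixP => i j.
  have Hc : B *m col j (cokermx B) = 0.
    apply/matrixP => k l; rewrite !mxE.
    have := congr1 (fun M : 'M[C]_(n, d) => M k j) (mulmx_coker B); rewrite !mxE => E; apply: etrans E.
    by apply: eq_bigr => r _; rewrite !mxE.
  have := congr1 (fun M : 'M[C]_(1, 1) => M i 0) (H _ Hc); rewrite !mxE => E; apply: etrans E.
  by apply: eq_bigr => r _; rewrite !mxE.
by case/submxP => u ->; exists u.
Qed.

Lemma comb (C : numFieldType) n d (A : 'M[C]_(n, d)) (T : pred 'I_d) :
  (forall k, ~~ T k -> exists v : 'rV_n,
      (forall i, T i -> (v *m A) 0 i = 0) /\ (v *m A) 0 k = 1) ->
  exists w : 'rV_n, (forall i, T i -> (w *m A) 0 i = 0) /\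
                    (forall k, ~~ T k -> (w *m A) 0 k != 0).
Proof.
move=> Hv.
suff: forall s : seq 'I_d, (forall k, k \in s -> ~~ T k) ->
   exists w : 'rV_n, (forall i, T i -> (w *m A) 0 i = 0) /\
                     (forall k, k \in s -> (w *m A) 0 k != 0).
  move/(_ (enum (predC T))) => [k|w [H1 H2]]; first by rewrite mem_enum.
  by exists w; split => // k Hk; apply: H2; rewrite mem_enum.
elim=> [|k s IH] Hs.
  by exists 0; split => // i; rewrite mul0mx mxE.
have Hs' : forall j, j \in s -> ~~ T j by move=> j Hj; apply: Hs; rewrite inE Hj orbT.
have [w [Hw1 Hw2]] := IH Hs'.
have [v [Hv1 Hv2]] := Hv k (Hs k (mem_head _ _)).
pose sg := 1 + \sum_(j < d) `|(w *m A) 0 j / (v *m A) 0 j|.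
have sg_ge j : 1 + `|(w *m A) 0 j / (v *m A) 0 j| <= sg.
  by rewrite lerD2l (bigD1 j) //= lerDl sumr_ge0.
have sg_gt0 : 0 < sg.
  apply: lt_le_trans (sg_ge k); exact: ltr_wpDr (normr_ge0 _) ltr01.
have Ent i : ((w + sg *: v) *m A) 0 i = (w *m A) 0 i + sg * (v *m A) 0 i.
  by rewrite mulmxDl -scalemxAl mxE [X in _ + X = _]mxE.
exists (w + sg *: v); split.
  by move=> i Ti; rewrite Ent Hw1 // Hv1 // mulr0 addr0.
move=> j Hj; rewrite Ent.
apply/eqP => E.
case: (eqVneq ((v *m A) 0 j) 0) => Hvj.
  rewrite Hvj mulr0 addr0 in E.
  move: Hj; rewrite inE => /orP[/eqP Hjk|Hjs].
    by rewrite Hjk Hv2 in Hvj; move/eqP: Hvj; rewrite oner_eq0.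
  by move: (Hw2 j Hjs); rewrite E eqxx.
have Esg : sg = - ((w *m A) 0 j / (v *m A) 0 j).
  apply: (mulIf Hvj); rewrite mulNr divfK //.
  by move/eqP: E; rewrite addrC addr_eq0 => /eqP ->.
have := sg_ge j; rewrite -[X in _ <= X]ger0_norm ?(ltW sg_gt0) // Esg normrN.
by rewrite -[X in _ <= X]add0r lerD2r ler10.
Qed.

Section Restr.
Variables (C : fieldType) (n d : nat).

Definition restr (P : pred 'I_d) (M : 'M[C]_(n, d)) : 'M[C]_(n, d) :=
  \matrix_(j, i) (if P i then M j i else 0).

Lemma restr_row P M (u : 'rV_n) i :
  (u *m restr P M) 0 i = if P i then (u *m M) 0 i else 0.
Proof.
rewrite mxE (eq_bigr (fun j => if P i then u 0 j * M j i else 0)); last first.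
  by move=> j _; rewrite mxE; case: (P i); rewrite ?mulr0.
by case: (P i); [rewrite mxE | rewrite big1].
Qed.

Lemma restr_col P M (c : 'cV_d) :
  M *m (\col_i (if P i then c i 0 else 0)) = restr P M *m c.
Proof.
apply/matrixP => j l; rewrite (ord1 l) !mxE; apply: eq_bigr => i _.
by rewrite !mxE; case: (P i); rewrite ?mulr0 ?mul0r.
Qed.
End Restr.

Lemma addscale_entry (C : pzRingType) m k (M N : 'M[C]_(m, k)) a i j :
  (M + a *: N) i j = M i j + a * N i j.
Proof. by rewrite !mxE. Qed.

Section Main.
Variables (R : realType) (n : nat) (Phi : seq 'rV[R]_n) (f : 'rV[R]_n).
Local Notation d := (size (pos_roots Phi f)).

Definition Am : 'M[R[i]]_(n, d) :=
  \matrix_(j, i) Complex ((@proot R n Phi f i) 0 j) 0.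

Lemma rootE h i : root_eval (@proot R n Phi f i) h = (h *m Am) 0 i.
Proof. by rewrite /root_eval mxE; apply: eq_bigr => j _; rewrite mxE mulrC. Qed.

Lemma van_col (c : 'cV_d) : Am *m c = 0 -> @vanishes_on_h R n Phi f (fun i => c i 0).
Proof.
move=> H h.
have E : ((h *m Am) *m c) 0 0 = 0 by rewrite -mulmxA H mulmx0 mxE.
move: E; rewrite mxE => E; apply: (etrans _ E).
by apply: eq_bigr => i _; rewrite rootE mulrC.
Qed.

Lemma easy_dir x : @in_hbar R n Phi f x -> @in_Z R n Phi f x.
Proof.
move=> Hb c Hc; apply: (Hb _ _ (@mhom_multihomog _ _ c)) => y [h ->].
rewrite meval_mhom.
transitivity (\sum_(i | c i != 0) c i * root_eval (@proot R n Phi f i) h).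
  by apply: eq_bigr => i _; rewrite /h_embed /affine_pt /= big1_eq mulr1.
have E := Hc h; rewrite (bigID (fun i => c i != 0)) /= in E.
rewrite [X in _ + X = _]big1 ?addr0 in E; first exact: E.
by move=> i /negPn/eqP ->; rewrite mul0r.
Qed.

Lemma hard_dir x : P1d_point x -> @in_Z R n Phi f x -> @in_hbar R n Phi f x.
Proof.
move=> Hx HZ.
pose T := fun i => (x i).1 != 0.
pose a := fun i => (x i).2 / (x i).1.
have Zc (c : 'cV_d) : Am *m c = 0 -> (mhomogenize (fun i => c i 0)).@[coords x] = 0.
  by move=> H; apply: HZ; apply: van_col.
have Z1 (c : 'cV_d) : Am *m c = 0 -> (forall i, c i 0 != 0 -> T i) ->
    \sum_i c i 0 * a i = 0.
  move=> H HT; have := Zc c H; rewrite meval_mhom.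
  rewrite (eq_bigr (fun i => c i 0 * a i * \prod_(j | c j 0 != 0) (x j).1)); last first.
    move=> i ci; rewrite (bigD1 i ci) /= /a -!mulrA; congr (_ * (_ * _)).
    by rewrite mulKf //; exact: HT.
  have PN : \prod_(j | c j 0 != 0) (x j).1 != 0 by apply/prodf_neq0 => j /HT.
  rewrite -big_distrl /= => /eqP; rewrite mulf_eq0 (negbTE PN) orbF => /eqP E.
  rewrite (bigID (fun i => c i 0 != 0)) /= E add0r big1 // => i /negPn/eqP ->.
  by rewrite mul0r.
have Z2 (c : 'cV_d) k : Am *m c = 0 -> ~~ T k -> c k 0 != 0 ->
    (forall i, c i 0 != 0 -> i != k -> T i) -> False.
  move=> H Tk ck HT; have := Zc c H; rewrite meval_mhom (bigD1 k ck) /= [X in _ + X = _]big1 ?addr0.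
    have x2 : (x k).2 != 0 by case: (Hx k) => // H1; rewrite /T H1 in Tk.
    have PN : \prod_(j | (c j 0 != 0) && (j != k)) (x j).1 != 0.
      by apply/prodf_neq0 => j /andP[cj jk]; exact: HT.
    by move/eqP; rewrite !mulf_eq0 (negbTE ck) (negbTE x2) (negbTE PN).
  move=> i /andP[ci ik]; rewrite (bigD1 k) /=; last by rewrite ck eq_sym ik.
  by rewrite (eqP (negbNE Tk)) mul0r !mulr0.
have [u Hu] : exists u : 'rV_n, \row_i (if T i then a i else 0) = u *m restr T Am.
  apply: dualP => c Hc.
  pose c' := \col_i (if T i then c i 0 else 0).
  have Hc' : Am *m c' = 0 by rewrite restr_col.
  have HT : forall i, c' i 0 != 0 -> T i.
    by move=> i; rewrite mxE; case: (T i); rewrite ?eqxx.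
  have E := Z1 c' Hc' HT.
  apply/matrixP => i j; rewrite (ord1 i) (ord1 j) [LHS]mxE [RHS]mxE.
  apply: (etrans _ E); apply: eq_bigr => k _; rewrite !mxE.
  by case: (T k); rewrite ?mul0r ?mulr0 // mulrC.
have HuT i : T i -> (u *m Am) 0 i = a i.
  move=> Ti; have := congr1 (fun M : 'rV_d => M 0 i) Hu.
  by rewrite /= restr_row Ti mxE Ti => ->.
have Hv k : ~~ T k -> exists v : 'rV_n,
    (forall i, T i -> (v *m Am) 0 i = 0) /\ (v *m Am) 0 k = 1.
  move=> Tk; pose P := fun i => T i || (i == k).
  have [v Hv] : exists v : 'rV_n, (\row_i ((i == k)%:R : R[i])) = v *m restr P Am.
    apply: dualP => c Hc.
    have ck : c k 0 = 0.
      apply/eqP/negP => ck.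
      pose c' := \col_i (if P i then c i 0 else 0).
      have Hc' : Am *m c' = 0 by rewrite restr_col.
      refine (Z2 c' k Hc' Tk _ _); first by rewrite mxE /P eqxx orbT; apply/negP.
      move=> i; rewrite mxE /P => ci ik; move: ci; rewrite (negbTE ik) orbF.
      by case: (T i) => //; rewrite eqxx.
    apply/matrixP => i j; rewrite (ord1 i) (ord1 j) [LHS]mxE [RHS]mxE (bigD1 k) //=.
    rewrite !mxE eqxx ck mulr0 add0r big1 // => l lk.
    by rewrite !mxE (negbTE lk) mul0r.
  exists v; split.
    move=> i Ti; have ik : i != k by apply: contraNneq Tk => <-.
    have := congr1 (fun M : 'rV_d => M 0 i) Hv.
    by rewrite /= restr_row /P Ti /= mxE (negbTE ik) => <-.
  have := congr1 (fun M : 'rV_d => M 0 k) Hv.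
  by rewrite /= restr_row /P eqxx orbT mxE eqxx => <-.
have [w [Hw1 Hw2]] := comb Hv.
move=> e p Hp Hvan.
pose U := fun i => (u *m Am) 0 i.
pose W := fun i => (w *m Am) 0 i.
pose y := fun (t : R[i]) i => if T i then (1, U i) else (t, t * U i + W i).
have Hy t : t != 0 -> p.@[coords (y t)] = 0.
  move=> tn.
  rewrite (@meval_scale _ _ e p (fun i => if T i then 1 else t)
             (h_embed (u + t^-1 *: w)) _ Hp).
    by rewrite Hvan ?mulr0 //; exists (u + t^-1 *: w).
  move=> i; rewrite /y /h_embed /affine_pt /= rootE mulmxDl -scalemxAl.
  rewrite addscale_entry.
  case: ifP => Ti.
    by rewrite /W Hw1 // mulr0 addr0 !mul1r.
  by rewrite mulr1 mulrDr mulrA divff // mul1r.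
pose xa := fun i => if T i then (0 : R[i], 0 : R[i]) else (1 : R[i], U i).
pose xb := fun i => if T i then (1 : R[i], U i) else (0 : R[i], W i).
have Hco t k : coords (y t) k = coords xa k * t + coords xb k.
  rewrite /coords /y /xa /xb; case: (T _); case: (odd k) => /=;
  by rewrite ?mul0r ?add0r ?mul1r ?addr0 // mulrC.
have [Q HQ] := meval_affine p Hco.
have Hy0 : p.@[coords (y 0)] = 0.
  by rewrite -HQ; apply: poly_at0 => t tn; rewrite HQ Hy.
rewrite (@meval_scale _ _ e p (fun i => if T i then (x i).1 else (x i).2 / W i)
           (y 0) _ Hp) ?Hy0 ?mulr0 //.
move=> i; rewrite /y; case: ifP => Ti /=.
  apply: injective_projections => /=; first by rewrite mulr1.
  by rewrite mulrC /U HuT // /a divfK.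
have x10 : (x i).1 == 0 by move/negbFE: Ti.
apply: injective_projections => /=; first by rewrite mulr0 (eqP x10).
by rewrite mul0r add0r divfK //; apply: Hw2; rewrite Ti.
Qed.

End Main.

Theorem mainTheorem4 (R : realType) (n : nat) (Phi : seq 'rV[R]_n)
    (f : 'rV[R]_n) :
  is_root_system Phi -> regular_for Phi f ->
  forall x : 'I_(size (pos_roots Phi f)) -> R[i] * R[i],
    P1d_point x ->
    (@in_Z R n Phi f x <-> @in_hbar R n Phi f x).
Proof.
move=> _ _ x Hx; split; [exact: hard_dir | exact: easy_dir].
Qed.
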